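(* Let $N$ be a natural number, $P=\{a\subseteq N: |a|\geq 2\}$, and let $\|\cdot\|_3$ be the graph coloring norm on subsets of $P$ (defined in the context). Let $E=\{e\subseteq N:|e|=2\}$ and for $A\subseteq P$ let \[\mathcal E_A=\{E'\subseteq E: (\forall e\in E')(\exists p\in A)\, e\subseteq p\ \text{ and }\ (\forall p\in A)(\exists e\in E')\, e\subseteq p\}.\] Then for every $A\subseteq P$, \[\|A\|_3=\min\{\|E'\|_3: E'\in\mathcal E_A\}.\]
   Context: $N=\{0,\ldots,N-1\}$. For $A\subseteq P$ and $z\subseteq N$ let $A\restriction z=\{a\in A: a\subseteq z\}$. The relation ''$\|A\|_3\geq m$'' is defined recursively: $\|A\|_3\geq 0$ always; $\|A\|_3\geq 1$ iff $A\neq\emptyset$; for $m\geq 1$, $\|A\|_3\geq m+1$ iff for every $z\subseteq N$ either $\|A\restriction z\|_3\geq m$ or $\|A\restriction(N\setminus z)\|_3\geq m$. Then $\|A\|_3$ is the largest $m$ with $\|A\|_3\geq m$. *)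

(* Defs.v *)
From mathcomp Require Import all_boot.
Set Implicit Arguments. Unset Strict Implicit. Unset Printing Implicit Defensive.

(* Ground set N = {0,...,N-1} is the finite type 'I_N.
   Subsets of N are {set 'I_N}; families of subsets are {set {set 'I_N}}. *)

Definition Pset (N : nat) : {set {set 'I_N}} := [set a : {set 'I_N} | 2 <= #|a|].

Definition Eset (N : nat) : {set {set 'I_N}} := [set e : {set 'I_N} | #|e| == 2].

Definition restr (N : nat) (A : {set {set 'I_N}}) (z : {set 'I_N}) : {set {set 'I_N}} :=
  [set a in A | a \subset z].

(* norm3_ge m A  <->  ||A||_3 >= m, by the recursive definition. *)
Fixpoint norm3_ge (N : nat) (m : nat) (A : {set {set 'I_N}}) {struct m} : bool :=
  match m with
  | 0 => true
  | S m' =>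
      match m' with
      | 0 => A != set0
      | S _ => [forall z : {set 'I_N},
                  norm3_ge m' (restr A z) || norm3_ge m' (restr A (~: z))]
      end
  end.

Definition is_norm3 (N : nat) (A : {set {set 'I_N}}) (k : nat) : Prop :=
  norm3_ge k A /\ (forall m, norm3_ge m A -> m <= k).

Definition calE (N : nat) (A : {set {set 'I_N}}) : {set {set {set 'I_N}}} :=
  [set E' : {set {set 'I_N}} |
     [&& E' \subset Eset N,
         [forall e in E', exists p in A, e \subset p] &
         [forall p in A, exists e in E', e \subset p]]].

(* Main.v *)
Require Import Defs.
From mathcomp Require Import all_boot.
From mathcomp Require Import zify.
From Stdlib Require Import Classical.
Set Implicit Arguments. Unset Strict Implicit. Unset Printing Implicit Defensive.

Definition good (N : nat) (A : {set {set 'I_N}}) (m : nat) :=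
  forall c : 'I_N -> nat, (forall x, c x < 2 ^ m) ->
    exists2 a, a \in A & forall x y, x \in a -> y \in a -> c x = c y.

Lemma not_good N (A : {set {set 'I_N}}) m : ~ good A m ->
  exists2 c : 'I_N -> nat, (forall x, c x < 2 ^ m) &
    forall a, a \in A -> ~ (forall x y, x \in a -> y \in a -> c x = c y).
Proof.
move=> H; apply: NNPP => H2; apply: H => c Hc; apply: NNPP => H3; apply: H2.
exists c => // a aA am; apply: H3; by exists a.
Qed.

Lemma div_one n d : 0 < d -> n < 2 * d -> n %/ d != 0 -> n %/ d = 1.
Proof.
move=> d0 h nz; have: n %/ d < 2 by rewrite ltn_divLR // mulnC.
by case: (n %/ d) nz => [|[|]].
Qed.

Lemma norm3_good N m (A : {set {set 'I_N}}) : norm3_ge m.+1 A <-> good A m.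
Proof.
elim: m A => [|m IH] A.
  change (norm3_ge 1 A) with (A != set0); split.
    move=> /set0Pn [a Ha] c Hc; exists a => // x y _ _.
    have := Hc x; have := Hc y; rewrite expn0; lia.
  move=> H; have [a Ha _] := H (fun _ => 0) (fun _ => erefl).
  by apply/set0Pn; exists a.
change (norm3_ge m.+2 A) with
  [forall z, norm3_ge m.+1 (restr A z) || norm3_ge m.+1 (restr A (~: z))].
split.
  move=> /forallP H c Hc.
  set z := [set x | c x %/ 2 ^ m == 0].
  have Hd : 0 < 2 ^ m by rewrite expn_gt0.
  case/orP: (H z) => /IH G.
    have [a] := G (fun x => c x %% 2 ^ m) (fun x => ltn_pmod _ Hd).
    rewrite inE => /andP[aA az] Hm; exists a => // x y xa ya.
    rewrite (divn_eq (c x) (2 ^ m)) (divn_eq (c y) (2 ^ m)) (Hm x y xa ya).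
    have:= subsetP az x xa; have := subsetP az y ya; rewrite !inE.
    by move=> /eqP -> /eqP ->.
  have [a] := G (fun x => c x %% 2 ^ m) (fun x => ltn_pmod _ Hd).
  rewrite inE => /andP[aA az] Hm; exists a => // x y xa ya.
  rewrite (divn_eq (c x) (2 ^ m)) (divn_eq (c y) (2 ^ m)) (Hm x y xa ya).
  have:= subsetP az x xa; have := subsetP az y ya; rewrite !inE.
  move=> ny nx.
  rewrite (div_one Hd _ nx) ?(div_one Hd _ ny) // -expnS; exact: Hc.
move=> G; apply/forallP => z; apply/orP.
case: (classic (good (restr A z) m)) => H1.
  by left; apply/IH.
case: (classic (good (restr A (~: z)) m)) => H2.
  by right; apply/IH.
exfalso.
have [c1 Hc1 N1] := not_good H1; have [c2 Hc2 N2] := not_good H2.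
have [a aA Hm] := G (fun x => if x \in z then c1 x else 2 ^ m + c2 x)
  (fun x => ltac:(rewrite expnS; case: (x \in z); have := Hc1 x; have := Hc2 x; lia)).
case: (boolP (a \subset z)) => az.
  apply: (N1 a); first by rewrite inE aA az.
  move=> x y xa ya; have := Hm x y xa ya.
  by rewrite /= (subsetP az x xa) (subsetP az y ya).
have [x xa xz] := subsetPn az.
have anz : a \subset ~: z.
  apply/subsetP => y ya; rewrite inE; apply/negP => yz.
  have := Hm x y xa ya; rewrite /= (negbTE xz) yz.
  have := Hc1 y; lia.
apply: (N2 a); first by rewrite inE aA anz.
move=> u v ua va; have := Hm u v ua va.
have := subsetP anz u ua; have := subsetP anz v va; rewrite !inE.
move=> /negbTE -> /negbTE ->; lia.
Qed.

Lemma good_mono N (A : {set {set 'I_N}}) m m' : good A m -> m' <= m -> good A m'.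
Proof.
move=> G le c Hc; apply: G => x.
apply: leq_trans (Hc x) _; exact: leq_pexp2l.
Qed.

Lemma norm3_mono N (A : {set {set 'I_N}}) m m' :
  norm3_ge m A -> m' <= m -> norm3_ge m' A.
Proof.
case: m' => [//|m']; case: m => [//|m] H le.
rewrite norm3_good; move: H; rewrite norm3_good => H; exact: good_mono H le.
Qed.

Lemma calE_le N (A E' : {set {set 'I_N}}) m :
  E' \in calE A -> norm3_ge m A -> norm3_ge m E'.
Proof.
move=> HE; case: m => // m; rewrite !norm3_good => G c Hc.
have [a aA Hm] := G c Hc.
move: HE; rewrite inE => /and3P[_ _ /forall_inP H3].
have /exists_inP[e eE ea] := H3 a aA.
exists e => // x y xe ye; apply: Hm; exact: (subsetP ea).
Qed.

Lemma bounded N (A : {set {set 'I_N}}) : A \subset Pset N -> ~ good A N.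
Proof.
move=> HA G.
have [a aA Hm] := G (fun x => val x)
  (fun x => ltn_trans (ltn_ord x) (ltn_expl _ (isT : 1 < 2))).
have := subsetP HA a aA; rewrite inE => /card_gt1P [x [y [xa ya ne]]].
by move: ne; rewrite (val_inj (Hm x y xa ya)) eqxx.
Qed.

Lemma notmono N (a : {set 'I_N}) (c : 'I_N -> nat) :
  ~ (forall x y, x \in a -> y \in a -> c x = c y) ->
  exists x y, [/\ x \in a, y \in a & c x != c y].
Proof.
move=> H; apply: NNPP => H2; apply: H => x y xa ya.
case: (eqVneq (c x) (c y)) => // ne; exfalso; apply: H2; by exists x, y.
Qed.

Theorem theorem5p26 (N : nat) (A : {set {set 'I_N}}) :
  A \subset Pset N ->
  exists k : nat,
    [/\ is_norm3 A k,
        (exists2 E' : {set {set 'I_N}}, E' \in calE A & is_norm3 E' k) &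
        (forall (E' : {set {set 'I_N}}) (k' : nat),
            E' \in calE A -> is_norm3 E' k' -> k <= k')].
Proof.
move=> HA.
have ex0 : exists i, (fun m => norm3_ge m A) i by exists 0.
have ub : forall i, (fun m => norm3_ge m A) i -> i <= N.+1.
  move=> i Hi; rewrite leqNgt; apply/negP => lt.
  have := norm3_mono Hi lt; rewrite norm3_good => G.
  by apply: (bounded HA); apply: good_mono G _.
have [k Hk Hmax] := ex_maxnP ex0 ub.
have nk : ~ good A k.
  by rewrite -norm3_good => H; have := Hmax _ H; rewrite ltnn.
have [c Hc Nc] := not_good nk.
set E' := [set e in Eset N | [exists p in A, e \subset p] &&
            [exists x in e, exists y in e, c x != c y]].
have HE : E' \in calE A.
  rewrite inE; apply/and3P; split.
  - by apply/subsetP => e; rewrite inE => /andP[].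
  - by apply/forall_inP => e; rewrite inE => /andP[_ /andP[]].
  apply/forall_inP => p pA.
  have [x [y [xp yp ne]]] := notmono (Nc p pA).
  have xy : x != y by apply/eqP => exy; rewrite exy eqxx in ne.
  have sub : [set x; y] \subset p.
    by apply/subsetP => w; rewrite !inE => /orP[/eqP->|/eqP->].
  apply/exists_inP; exists [set x; y] => //.
  rewrite !inE cards2 xy /=; apply/andP; split.
    by apply/exists_inP; exists p.
  apply/exists_inP; exists x; first by rewrite !inE eqxx.
  by apply/exists_inP; exists y; first by rewrite !inE eqxx orbT.
exists k; split.
- by split.
- exists E' => //; split; first exact: calE_le HE Hk.
  move=> m Hm; rewrite leqNgt; apply/negP => km.
  have := norm3_mono Hm km; rewrite norm3_good => G.
  have [e] := G c Hc.
  rewrite inE => /andP[_ /andP[_ /exists_inP[x xe /exists_inP[y ye ne]]]] Hm2.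
  by rewrite (Hm2 x y xe ye) eqxx in ne.
- move=> F k' HF [_ Hk']; apply: Hk'; exact: calE_le HF Hk.
Qed.
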